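(* Let $\{d_{k,j}:k,j\geq 0\}$ be nonnegative numbers such that $D_j(\delta):=\sum_{k\geq 0}d_{k,j}\delta^k\in(0,\infty)$ for all $\delta>0$ and all $j\geq 0$. Let $\{\delta_j(\cdot):j\geq 0\}$ be positive functions on $[0,\infty)$ with $\delta_j(t)\to\infty$ as $t\to\infty$ for every $j$, assume $\sum_{j\geq 0}\frac{d_{j,j}\delta^j}{D_j(\delta)}\in(0,\infty)$ for all $\delta>0$, and let $\{N(t):t\geq 0\}$ be nonnegative integer valued random variables with $$P(N(t)=k)=\frac{\frac{d_{k,k}(\delta_k(t))^k}{D_k(\delta_k(t))}}{\sum_{j\geq 0}\frac{d_{j,j}(\delta_j(t))^j}{D_j(\delta_j(t))}},\quad k\geq 0.$$ Assume the following: (B1) there exists an integer $n\geq 0$ such that for all $j\geq n$, $d_{k,j}=d_k$ for all $k\geq 0$ (so $D_j=D:=\sum_{k\ge0}d_k\delta^k$) and $\delta_j(\cdot)=\delta(\cdot)$ do not depend on $j$; moreover there exist functions $v:(0,\infty)\to(0,\infty)$ with $v(t)\to\infty$ as $t\to\infty$, and a differentiable function $\Delta:(0,\infty)\to\mathbb{R}$, such that $\lim_{t\to\infty}\frac{1}{v(t)}\log D(ut)=\Delta(u)$ for all $u>0$; (B2) the set $\{k\geq 0:d_{k,k}>0\}$ is unbounded; (B3) for all $k\in\{0,1,\ldots,n-1\}$: if $d_k>0$ then $\lim_{t\to\infty}\frac{d_{k,k}(\delta_k(t))^k/D_k(\delta_k(t))}{d_k(\delta(t))^k/D(\delta(t))}=0$,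 and if $d_k=0$ then $d_{k,k}=0$. Let $\Lambda(\theta):=\Delta(e^\theta)-\Delta(1)$, assume that $\Delta''(1)$ exists (so that $\Lambda''(0)$ exists), and assume moreover: (i) whenever $u(t)\to1$ as $t\to\infty$, the function $H_1(t):=\log\frac{D(u(t)\delta(t))}{D(\delta(t))}-v(\delta(t))(\Delta(u(t))-\Delta(1))$ is bounded; (ii) $H_2(t):=\sqrt{v(\delta(t))}\left(\Lambda'(0)-\frac{\delta(t)D'(\delta(t))}{v(\delta(t))D(\delta(t))}\right)$ is bounded; (iii) $H_3(t):=\frac{1}{\sqrt{v(\delta(t))}}\left(\frac{\delta(t)D'(\delta(t))}{D(\delta(t))}-\mathbb{E}[N(t)]\right)$ is bounded. Then for every choice of positive numbers $\{a(t):t>0\}$ with $a(t)\to0$ and $v(\delta(t))a(t)\to\infty$ as $t\to\infty$, the family $\left\{\frac{N(t)-\mathbb{E}[N(t)]}{v(\delta(t))}\sqrt{v(\delta(t))a(t)}:t>0\right\}$ satisfies the large deviation principle with speed $1/a(t)$ and good rate function $\tilde{\Lambda}^*$ given by $\tilde{\Lambda}^*(x)=\frac{x^2}{2\Lambda''(0)}$ if $\Lambda''(0)>0$, and, if $\Lambda''(0)=0$, by $\tilde{\Lambda}^*(0)=0$ and $\tilde{\Lambda}^*(x)=\infty$ for $x\neq0$.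
   Context: A family of real random variables $\{X_t:t>0\}$ satisfies the large deviation principle (LDP) with speed $v_t\to\infty$ and rate function $I$ (a lower semicontinuous map $\mathbb{R}\to[0,\infty]$; good if all level sets $\{I\le\eta\}$ are compact) if $\limsup_{t\to\infty}\frac{1}{v_t}\log P(X_t\in C)\leq-\inf_{x\in C}I(x)$ for all closed $C$ and $\liminf_{t\to\infty}\frac{1}{v_t}\log P(X_t\in O)\geq-\inf_{x\in O}I(x)$ for all open $O$. *)

(* Defs.v *)
From Stdlib Require Import Reals Lra ClassicalEpsilon.
From Stdlib Require Import Rtopology.
From Coquelicot Require Import Coquelicot.
Open Scope R_scope.

Definition Dser (c : nat -> R) (x : R) : R := Series (fun k => c k * x ^ k).

Definition Dj (d : nat -> nat -> R) (j : nat) (x : R) : R :=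
  Dser (fun k => d k j) x.

Definition weight (d : nat -> nat -> R) (deltas : nat -> R -> R) (k : nat) (t : R) : R :=
  d k k * (deltas k t) ^ k / Dj d k (deltas k t).

Definition pmf (d : nat -> nat -> R) (deltas : nat -> R -> R) (t : R) (k : nat) : R :=
  weight d deltas k t / Series (fun j => weight d deltas j t).

Definition mean (p : nat -> R) : R := Series (fun k => INR k * p k).

Definition prob (p : nat -> R) (f : nat -> R) (A : R -> Prop) : R :=
  Series (fun k => if excluded_middle_informative (A (f k)) then p k else 0).

Definition ev_infty (P : R -> Prop) : Prop := exists T : R, forall t, T < t -> P t.

Definition rate_function (I : R -> Rbar) : Prop :=
  forall eta : R, closed_set (fun x => Rbar_le (I x) eta).
Definition good_rate_function (I : R -> Rbar) : Prop :=
  rate_function I /\ forall eta : R, compact (fun x => Rbar_le (I x) eta).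

(** LDP for the family X_t := X t (N(t)), N(t) with law p t, speed s, rate I.
    Upper bound  limsup (1/s) log P(X_t in C) <= - inf_C I  written out as:
      for every real y <= inf_C I and eps > 0, eventually P(X_t in C) <= exp((-y+eps) s(t)).
    Lower bound  liminf (1/s) log P(X_t in O) >= - inf_O I  written out as:
      for every x in O with I x finite and eps > 0,
      eventually P(X_t in O) >= exp((-I x - eps) s(t)). *)
Definition LDP (p : R -> nat -> R) (X : R -> nat -> R) (s : R -> R) (I : R -> Rbar) : Prop :=
  rate_function I /\
  (forall C : R -> Prop, closed_set C ->
     forall y : R, (forall x, C x -> Rbar_le y (I x)) ->
     forall eps : R, 0 < eps ->
       ev_infty (fun t => prob (p t) (X t) C <= exp ((- y + eps) * s t))) /\
  (forall O : R -> Prop, open_set O ->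
     forall (x ix : R), O x -> I x = Finite ix ->
     forall eps : R, 0 < eps ->
       ev_infty (fun t => exp ((- ix - eps) * s t) <= prob (p t) (X t) O)).

Definition Lambda (Delta : R -> R) (theta : R) : R := Delta (exp theta) - Delta 1.

Definition tilde_rate (L2 : R) (x : R) : Rbar :=
  if Rlt_dec 0 L2 then Finite (x ^ 2 / (2 * L2))
  else if Req_EM_T x 0 then Finite 0 else p_infty.

(* Main.v *)
Require Import Defs.
From Stdlib Require Import Reals Lra Lia Psatz ClassicalEpsilon Rtopology FunctionalExtensionality PropExtensionality.
From Coquelicot Require Import Coquelicot.
Open Scope R_scope.

Lemma ex_series_extR (a b : nat -> R) : (forall n, a n = b n) -> ex_series a -> ex_series b.
Proof. intros H. apply ex_series_ext. exact H. Qed.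
Lemma ex_series_scalR (c : R) (a : nat -> R) : ex_series a -> ex_series (fun n => c * a n).
Proof. intros H. apply (ex_series_scal_l c a H). Qed.
Lemma ex_series_plusR (a b : nat -> R) : ex_series a -> ex_series b -> ex_series (fun n => a n + b n).
Proof. intros H1 H2. apply (ex_series_plus a b H1 H2). Qed.

Lemma ev_and (P Q : R -> Prop) : ev_infty P -> ev_infty Q -> ev_infty (fun t => P t /\ Q t).
Proof.
  intros [T1 H1] [T2 H2]. exists (Rmax T1 T2). intros t Ht. split.
  - apply H1. eapply Rle_lt_trans; [apply Rmax_l|exact Ht].
  - apply H2. eapply Rle_lt_trans; [apply Rmax_r|exact Ht].
Qed.

Lemma ev_imp (P Q : R -> Prop) : ev_infty P -> (forall t, P t -> Q t) -> ev_infty Q.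
Proof. intros [T H] HPQ. exists T. intros t Ht. apply HPQ, H, Ht. Qed.

Lemma ev_gt (T : R) : ev_infty (fun t => T < t).
Proof. exists T. auto. Qed.

Lemma ev_fin (n : nat) (P : nat -> R -> Prop) :
  (forall k, (k < n)%nat -> ev_infty (P k)) ->
  ev_infty (fun t => forall k, (k < n)%nat -> P k t).
Proof.
  induction n as [|n IH]; intros H.
  - exists 0. intros t _ k Hk. lia.
  - assert (A : ev_infty (fun t => forall k, (k < n)%nat -> P k t)).
    { apply IH. intros k Hk. apply H. lia. }
    assert (B : ev_infty (P n)) by (apply H; lia).
    apply (ev_imp _ _ (ev_and _ _ A B)). intros t [HA HB] k Hk.
    destruct (Nat.eq_dec k n) as [->|Hne]; auto. apply HA. lia.
Qed.

Lemma lim_fin (f : R -> R) (l : R) : is_lim f p_infty l ->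
  forall eps, 0 < eps -> ev_infty (fun t => Rabs (f t - l) < eps).
Proof. intros H eps He. apply is_lim_spec in H. exact (H (mkposreal eps He)). Qed.

Lemma lim_inf (f : R -> R) : is_lim f p_infty p_infty ->
  forall M, ev_infty (fun t => M < f t).
Proof. intros H M. apply is_lim_spec in H. exact (H M). Qed.

Lemma lim_fin_conv (f : R -> R) (l : R) :
  (forall eps, 0 < eps -> ev_infty (fun t => Rabs (f t - l) < eps)) -> is_lim f p_infty l.
Proof. intros H. apply is_lim_spec. intros eps. apply H, cond_pos. Qed.

Lemma exp_mono x y : x <= y -> exp x <= exp y.
Proof. intros [H|H]; [apply Rlt_le, exp_increasing, H| subst; lra]. Qed.

Lemma exp_ge1 x : 0 <= x -> 1 <= exp x.
Proof. intros H. pose proof (exp_ineq1_le x). lra. Qed.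

Lemma Rbar_le_fin (a b : R) : Rbar_le (Finite a) (Finite b) <-> a <= b.
Proof. reflexivity. Qed.

Lemma rate_good (c : R) : good_rate_function (tilde_rate c).
Proof.
  assert (HC : forall eta : R, compact (fun x => Rbar_le (tilde_rate c x) eta)).
  { intros eta.
    assert (E : exists lo hi, (fun x => Rbar_le (tilde_rate c x) eta) = (fun x => lo <= x <= hi)).
    { unfold tilde_rate. destruct (Rlt_dec 0 c) as [Hc|Hc].
      - destruct (Rle_dec 0 eta) as [He|He].
        + exists (- sqrt (2*c*eta)), (sqrt (2*c*eta)).
          apply functional_extensionality; intros x; apply propositional_extensionality.
          rewrite Rbar_le_fin. assert (Hs : 0 <= 2*c*eta) by nra.
          pose proof (sqrt_sqrt _ Hs) as Hsq. pose proof (sqrt_pos (2*c*eta)).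
          split.
          * intros Hx. assert (x^2 <= 2*c*eta).
            { apply Rmult_le_reg_r with (/ (2*c)). apply Rinv_0_lt_compat; lra.
              replace (2*c*eta*/(2*c)) with eta by (field; lra). exact Hx. }
            split; nra.
          * intros Hx. assert (x^2 <= 2*c*eta) by nra.
            apply Rmult_le_reg_r with (2*c). lra.
            unfold Rdiv; rewrite Rmult_assoc, Rinv_l, Rmult_1_r by lra; nra.
        + exists 1, 0. apply functional_extensionality; intros x; apply propositional_extensionality.
          rewrite Rbar_le_fin. split; [|intros; lra]. intros Hx. exfalso.
          assert (0 <= x^2/(2*c)). { apply Rmult_le_pos. nra. apply Rlt_le, Rinv_0_lt_compat; lra. }
          lra.
      - destruct (Rle_dec 0 eta) as [He|He].
        + exists 0, 0. apply functional_extensionality; intros x; apply propositional_extensionality.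
          destruct (Req_EM_T x 0) as [->|Hx]; simpl; split; intros; try lra. 
        + exists 1, 0. apply functional_extensionality; intros x; apply propositional_extensionality.
          destruct (Req_EM_T x 0) as [->|Hx]; simpl; split; intros; try lra. }
    destruct E as (lo & hi & ->). apply compact_P3. }
  split; [|exact HC]. intros eta. apply compact_P2, HC.
Qed.
Definition Mg (p X : nat -> R) (mu : R) : R := Series (fun k => p k * exp (mu * X k)).

Lemma Mg_bounds (p X : R -> nat -> R) (a : R -> R) (c : R)
 (Hlim : forall l eps, 0 < eps -> ev_infty (fun t => 0 < Mg (p t) (X t) (l / a t) /\
     Rabs (a t * ln (Mg (p t) (X t) (l / a t)) - c * l^2/2) < eps))
 (Ha : ev_infty (fun t => 0 < a t)) :
 forall l eps, 0 < eps -> ev_infty (fun t =>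
   exp ((c*l^2/2 - eps) * / a t) <= Mg (p t) (X t) (l / a t) <= exp ((c*l^2/2 + eps) * / a t)).
Proof.
  intros l eps He. apply (ev_imp _ _ (ev_and _ _ (Hlim l eps He) Ha)).
  intros t [[HM Hab] Hat]. set (M := Mg _ _ _) in *.
  assert (E : ln M = (a t * ln M) * / a t) by (field; lra).
  apply Rabs_def2 in Hab.
  assert (Hi : 0 < / a t) by (apply Rinv_0_lt_compat; lra).
  rewrite <- (exp_ln M HM).
  split; apply exp_mono; rewrite E; apply Rmult_le_compat_r; lra.
Qed.

Lemma exp_big (a : R -> R) (Hai : forall K, ev_infty (fun t => K < / a t)) e K :
  0 < e -> ev_infty (fun t => K <= exp (e * / a t)).
Proof.
  intros He. destruct (Rle_dec K 0).
  - exists 0; intros t _; pose proof (exp_pos (e * / a t)); lra.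
  - apply (ev_imp _ _ (Hai (ln K / e))). intros t Ht.
    rewrite <- (exp_ln K) by lra. apply exp_mono.
    apply Rmult_lt_compat_l with (r:=e) in Ht; auto.
    replace (e * (ln K / e)) with (ln K) in Ht by (field; lra). lra.
Qed.

Lemma sqrt_sq_abs x : sqrt (x ^ 2) = Rabs x.
Proof. rewrite <- sqrt_Rsqr_abs. unfold Rsqr. f_equal. ring. Qed.

Lemma le_scale (q E : R) : 0 <= q -> 1 <= E -> q <= E * q.
Proof. intros. nra. Qed.

Lemma GE_upper (p X : R -> nat -> R) (a : R -> R) (c : R)
 (Hp : ev_infty (fun t => forall k, 0 <= p t k))
 (Hex : forall l, ev_infty (fun t => ex_series (fun k => p t k * exp (l / a t * X t k))))
 (Hlim : forall l eps, 0 < eps -> ev_infty (fun t => 0 < Mg (p t) (X t) (l / a t) /\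
     Rabs (a t * ln (Mg (p t) (X t) (l / a t)) - c * l^2/2) < eps))
 (Ha : ev_infty (fun t => 0 < a t))
 (Hai : forall K, ev_infty (fun t => K < / a t)) :
  forall C : R -> Prop, closed_set C ->
     forall y : R, (forall x, C x -> Rbar_le y (tilde_rate c x)) ->
     forall eps : R, 0 < eps ->
       ev_infty (fun t => prob (p t) (X t) C <= exp ((- y + eps) * / a t)).
Proof.
  intros C HC y Hy eps He.
  destruct (Rle_dec y 0) as [Hy0|Hy0].
  - pose proof (Mg_bounds p X a c Hlim Ha 0 eps He) as MB.
    apply (ev_imp _ _ (ev_and _ _ (ev_and _ _ (ev_and _ _ Hp (Hex 0)) MB) Ha)).
    intros t [[[Hpt Hex0] [_ HM]] Hat].
    assert (Hi : 0 < / a t) by (apply Rinv_0_lt_compat; lra).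
    unfold prob. eapply Rle_trans.
    + apply Series_le with (b := fun k => p t k * exp (0 / a t * X t k)); [|exact Hex0].
      intros k. replace (0 / a t * X t k) with 0 by (unfold Rdiv; ring). rewrite exp_0.
      specialize (Hpt k).
      destruct (excluded_middle_informative _); lra.
    + eapply Rle_trans; [exact HM|]. apply exp_mono. apply Rmult_le_compat_r; [lra|].
      assert (c*0^2/2 = 0) by field. lra.
  - assert (Hrt : exists r th, 0 < r /\ 0 < th /\ (forall x, C x -> r <= Rabs x) /\
                              - th * r + c * th^2/2 <= - y).
    { destruct (Rlt_dec 0 c) as [Hc|Hc].
      - exists (sqrt (2*c*y)), (sqrt (2*c*y) / c).
        assert (Hs : 0 < 2*c*y) by nra.
        pose proof (sqrt_lt_R0 _ Hs) as Hr. pose proof (sqrt_sqrt _ (Rlt_le _ _ Hs)) as Hrr.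
        split; [exact Hr|]. split; [apply Rdiv_lt_0_compat; lra|]. split.
        + intros x Cx. specialize (Hy x Cx). unfold tilde_rate in Hy.
          destruct (Rlt_dec 0 c) as [_|]; [|lra]. rewrite Rbar_le_fin in Hy.
          rewrite <- sqrt_sq_abs. apply sqrt_le_1_alt.
          apply Rmult_le_compat_r with (r := 2*c) in Hy; [|lra].
          replace (x ^ 2 / (2 * c) * (2 * c)) with (x^2) in Hy by (field; lra). lra.
        + set (r := sqrt (2*c*y)) in *.
          replace (- (r / c) * r + c * (r / c) ^ 2 / 2) with (- (r*r) / (2*c)) by (field; lra).
          rewrite Hrr. right. field. lra.
      - assert (H0 : ~ C 0).
        { intros C0. specialize (Hy 0 C0). unfold tilde_rate in Hy.
          destruct (Rlt_dec 0 c); [lra|]. destruct (Req_EM_T 0 0); [|congruence].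
          rewrite Rbar_le_fin in Hy. lra. }
        destruct (HC 0 H0) as [dl Hdl].
        exists dl, (y / dl). pose proof (cond_pos dl).
        split; [lra|]. split; [apply Rdiv_lt_0_compat; lra|]. split.
        + intros x Cx. destruct (Rle_dec dl (Rabs x)) as [|Hn]; [assumption|].
          exfalso. apply (Hdl x); [|exact Cx]. unfold disc. rewrite Rminus_0_r. lra.
        + replace (- (y / dl) * dl) with (-y) by (field; lra).
          assert (0 <= (y/dl)^2) by nra. nra. }
    destruct Hrt as (r & th & Hr & Hth & HCr & Hcond).
    pose proof (Mg_bounds p X a c Hlim Ha th (eps/2) ltac:(lra)) as MB1.
    pose proof (Mg_bounds p X a c Hlim Ha (-th) (eps/2) ltac:(lra)) as MB2.
    pose proof (exp_big a Hai (eps/2) 2 ltac:(lra)) as EB.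
    apply (ev_imp _ _ (ev_and _ _ (ev_and _ _ (ev_and _ _ (ev_and _ _ (ev_and _ _
       (ev_and _ _ Hp (Hex 0)) (Hex th)) (Hex (-th))) (ev_and _ _ MB1 MB2)) Ha) EB)).
    intros t [[[[[[Hpt Hex0] Hex1] Hex2] [[_ HM1] [_ HM2]]] Hat] HEB].
    assert (Hi : 0 < / a t) by (apply Rinv_0_lt_compat; lra).
    set (ia := / a t) in *.
    set (E1 := exp (- th * r * ia)).
    unfold prob. eapply Rle_trans.
    + apply Series_le with (b := fun k => E1 * (p t k * exp (th / a t * X t k))
                                         + E1 * (p t k * exp (- th / a t * X t k))).
      * intros k. specialize (Hpt k).
        assert (P1 : 0 <= E1 * (p t k * exp (th / a t * X t k))).
        { unfold E1. pose proof (exp_pos (- th * r * ia)). pose proof (exp_pos (th / a t * X t k)).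
          apply Rmult_le_pos; [lra|]. apply Rmult_le_pos; lra. }
        assert (P2 : 0 <= E1 * (p t k * exp (- th / a t * X t k))).
        { unfold E1. pose proof (exp_pos (- th * r * ia)). pose proof (exp_pos (- th / a t * X t k)).
          apply Rmult_le_pos; [lra|]. apply Rmult_le_pos; lra. }
        destruct (excluded_middle_informative _) as [Cx|]; [|lra].
        specialize (HCr _ Cx). split; [lra|].
        destruct (Rle_dec 0 (X t k)) as [Hx|Hx].
        -- rewrite Rabs_right in HCr by lra.
           cut (p t k <= E1 * (p t k * exp (th / a t * X t k))); [lra|].
           replace (E1 * (p t k * exp (th / a t * X t k))) with ((exp (th / a t * X t k) * E1) * p t k) by ring.
           apply le_scale; [lra|]. unfold E1. rewrite <- exp_plus. apply exp_ge1.
           replace (th / a t * X t k + - th * r * ia) with (th * ia * (X t k - r)) by (unfold ia, Rdiv; ring).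
           apply Rmult_le_pos; [apply Rmult_le_pos|]; lra.
        -- rewrite Rabs_left in HCr by lra.
           cut (p t k <= E1 * (p t k * exp (- th / a t * X t k))); [lra|].
           replace (E1 * (p t k * exp (- th / a t * X t k))) with ((exp (- th / a t * X t k) * E1) * p t k) by ring.
           apply le_scale; [lra|]. unfold E1. rewrite <- exp_plus. apply exp_ge1.
           replace (- th / a t * X t k + - th * r * ia) with (th * ia * (- X t k - r)) by (unfold ia, Rdiv; ring).
           apply Rmult_le_pos; [apply Rmult_le_pos|]; lra.
      * apply (ex_series_plus (fun k => E1 * (p t k * exp (th / a t * X t k)))
                              (fun k => E1 * (p t k * exp (- th / a t * X t k)))).
        -- apply (ex_series_scal_l E1 (fun k => p t k * exp (th / a t * X t k))), Hex1.
        -- apply (ex_series_scal_l E1 (fun k => p t k * exp (- th / a t * X t k))), Hex2.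
    + rewrite Series_plus.
      2: apply (ex_series_scal_l E1 (fun k => p t k * exp (th / a t * X t k))), Hex1.
      2: apply (ex_series_scal_l E1 (fun k => p t k * exp (- th / a t * X t k))), Hex2.
      rewrite !Series_scal_l.
      change (Series (fun k => p t k * exp (th / a t * X t k))) with (Mg (p t) (X t) (th / a t)).
      change (Series (fun k => p t k * exp (- th / a t * X t k))) with (Mg (p t) (X t) (- th / a t)).
      replace (c * (- th) ^ 2 / 2 + eps / 2) with (c * th ^ 2 / 2 + eps / 2) in HM2 by field.
      assert (HE1 : 0 < E1) by apply exp_pos.
      apply Rle_trans with (E1 * exp ((c * th ^ 2 / 2 + eps / 2) * ia) * 2).
      { apply Rmult_le_compat_l with (r := E1) in HM1; [|lra].
        apply Rmult_le_compat_l with (r := E1) in HM2; [|lra]. lra. }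
      unfold E1. rewrite <- exp_plus.
      apply Rle_trans with (exp ((-y + eps/2) * ia) * exp (eps/2 * ia)).
      { apply Rmult_le_compat; [apply Rlt_le, exp_pos|lra| |exact HEB].
        apply exp_mono. replace (- th * r * ia + (c * th ^ 2 / 2 + eps / 2) * ia)
          with ((- th * r + c * th ^ 2 / 2 + eps / 2) * ia) by field.
        apply Rmult_le_compat_r; lra. }
      rewrite <- exp_plus. right. f_equal. field.
Qed.

Lemma GE_lower (p X : R -> nat -> R) (a : R -> R) (c : R)
 (Hp : ev_infty (fun t => forall k, 0 <= p t k))
 (Hex : forall l, ev_infty (fun t => ex_series (fun k => p t k * exp (l / a t * X t k))))
 (Hlim : forall l eps, 0 < eps -> ev_infty (fun t => 0 < Mg (p t) (X t) (l / a t) /\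
     Rabs (a t * ln (Mg (p t) (X t) (l / a t)) - c * l^2/2) < eps))
 (Ha : ev_infty (fun t => 0 < a t))
 (Hai : forall K, ev_infty (fun t => K < / a t)) :
  forall O : R -> Prop, open_set O ->
     forall (x ix : R), O x -> tilde_rate c x = Finite ix ->
     forall eps : R, 0 < eps ->
       ev_infty (fun t => exp ((- ix - eps) * / a t) <= prob (p t) (X t) O).
Proof.
  intros O HO x ix Ox Hix eps He.
  destruct (HO x Ox) as [r0 Hr0].
  assert (Hth : exists th, c * th = x /\ ix = c * th^2/2).
  { unfold tilde_rate in Hix. destruct (Rlt_dec 0 c) as [Hc|Hc].
    - exists (x / c). injection Hix; intros <-. split; field; lra.
    - destruct (Req_EM_T x 0) as [->|]; [|discriminate]. injection Hix; intros <-.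
      exists 0. split; field. }
  destruct Hth as (th & Hcx & Hixe).
  pose proof (cond_pos r0) as Hr0p. pose proof (Rabs_pos th) as Habs.
  set (r := Rmin r0 (eps / (4 * (Rabs th + 1)))).
  assert (Hr : 0 < r) by (apply Rmin_pos; [lra| apply Rdiv_lt_0_compat; lra]).
  assert (Hrr0 : r <= r0) by apply Rmin_l.
  assert (Hthr : Rabs th * r <= eps / 4).
  { assert (H1 : r <= eps / (4 * (Rabs th + 1))) by apply Rmin_r.
    assert (H2 : r * (Rabs th + 1) <= eps / 4).
    { replace (eps / 4) with (eps / (4 * (Rabs th + 1)) * (Rabs th + 1)) by (field; lra).
      apply Rmult_le_compat_r; lra. }
    nra. }
  set (lam := r / (Rabs c + 1)).
  pose proof (Rabs_pos c) as Habc.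
  assert (Hlam : 0 < lam) by (apply Rdiv_lt_0_compat; lra).
  assert (Hlr : lam * (Rabs c + 1) = r) by (unfold lam; field; lra).
  assert (Hcl : c * lam <= Rabs c * lam) by (apply Rmult_le_compat_r; [lra| apply Rle_abs]).
  set (g := lam * r - c * lam^2/2).
  assert (Hg : 0 < g) by (unfold g; nra).
  set (e1 := Rmin (g/4) (eps/8)).
  assert (He1 : 0 < e1) by (apply Rmin_pos; lra).
  assert (He1g : e1 <= g/4) by apply Rmin_l.
  assert (He1e : e1 <= eps/8) by apply Rmin_r.
  pose proof (Mg_bounds p X a c Hlim Ha th e1 He1) as MB0.
  pose proof (Mg_bounds p X a c Hlim Ha (th+lam) e1 He1) as MB1.
  pose proof (Mg_bounds p X a c Hlim Ha (th-lam) e1 He1) as MB2.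
  pose proof (exp_big a Hai (g/2) 4 ltac:(lra)) as EB1.
  pose proof (exp_big a Hai (5*eps/8) 2 ltac:(lra)) as EB2.
  apply (ev_imp _ _ (ev_and _ _ (ev_and _ _ (ev_and _ _ (ev_and _ _ (ev_and _ _ (ev_and _ _
       (ev_and _ _ Hp (Hex 0)) (Hex th)) (ev_and _ _ (Hex (th+lam)) (Hex (th-lam))))
       (ev_and _ _ MB0 (ev_and _ _ MB1 MB2))) Ha) EB1) EB2)).
  intros t [[[[[[[Hpt Hex0] Hexth] [Hex1 Hex2]] [[HM0 _] [[_ HM1] [_ HM2]]]] Hat] HEB1] HEB2].
  assert (Hi : 0 < / a t) by (apply Rinv_0_lt_compat; lra).
  set (ia := / a t) in *.
  set (K := exp ((th * x + Rabs th * r) * ia)).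
  set (T1 := exp (- lam * (x + r) * ia)).
  set (T2 := exp (lam * (x - r) * ia)).
  set (ind := fun k => if excluded_middle_informative (O (X t k)) then p t k else 0).
  assert (Hind : forall k, 0 <= ind k <= p t k * exp (0 / a t * X t k)).
  { intros k. unfold ind. replace (0 / a t * X t k) with 0 by (unfold Rdiv; ring). rewrite exp_0.
    specialize (Hpt k). destruct (excluded_middle_informative _); lra. }
  assert (Hexind : ex_series ind).
  { apply (ex_series_le ind (fun k => p t k * exp (0 / a t * X t k))); [|exact Hex0].
    intros k. specialize (Hind k). change norm with Rabs. simpl. rewrite Rabs_right; lra. }
  assert (HexA : ex_series (fun k => K * ind k)) by apply (ex_series_scal_l K ind), Hexind.
  assert (HexB : ex_series (fun k => T1 * (p t k * exp ((th+lam) / a t * X t k))))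
    by apply (ex_series_scal_l T1 (fun k => p t k * exp ((th+lam) / a t * X t k))), Hex1.
  assert (HexC : ex_series (fun k => T2 * (p t k * exp ((th-lam) / a t * X t k))))
    by apply (ex_series_scal_l T2 (fun k => p t k * exp ((th-lam) / a t * X t k))), Hex2.
  assert (HexBC : ex_series (fun k => T1 * (p t k * exp ((th+lam) / a t * X t k)) + T2 * (p t k * exp ((th-lam) / a t * X t k))))
    by apply (ex_series_plus _ _ HexB HexC).
  assert (Key : Mg (p t) (X t) (th / a t) <=
     K * prob (p t) (X t) O + T1 * Mg (p t) (X t) ((th+lam) / a t) + T2 * Mg (p t) (X t) ((th-lam) / a t)).
  { unfold Mg, prob. fold ind. rewrite <- !Series_scal_l. rewrite Rplus_assoc.
    rewrite <- Series_plus by assumption. rewrite <- Series_plus by assumption.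
    apply Series_le; [|apply (ex_series_plus _ _ HexA HexBC)].
    intros k. specialize (Hpt k). pose proof (exp_pos (th / a t * X t k)) as Hep.
    split; [apply Rmult_le_pos; lra|].
    assert (P1 : 0 <= K * ind k) by (apply Rmult_le_pos; [apply Rlt_le, exp_pos| apply Hind]).
    assert (P2 : 0 <= T1 * (p t k * exp ((th+lam) / a t * X t k))).
    { apply Rmult_le_pos; [apply Rlt_le, exp_pos|]. apply Rmult_le_pos; [lra|apply Rlt_le, exp_pos]. }
    assert (P3 : 0 <= T2 * (p t k * exp ((th-lam) / a t * X t k))).
    { apply Rmult_le_pos; [apply Rlt_le, exp_pos|]. apply Rmult_le_pos; [lra|apply Rlt_le, exp_pos]. }
    set (xk := X t k) in *.
    destruct (Rlt_dec (Rabs (xk - x)) r) as [Hin|Hout].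
    - assert (Oxk : O xk) by (apply Hr0; unfold disc; lra).
      assert (Hik : ind k = p t k) by (unfold ind; fold xk; destruct (excluded_middle_informative (O xk)); tauto).
      rewrite Hik.
      cut (p t k * exp (th / a t * xk) <= K * p t k); [lra|].
      rewrite Rmult_comm. apply Rmult_le_compat_r; [lra|].
      unfold K. apply exp_mono. change (th / a t * xk) with (th * ia * xk).
      replace (th * ia * xk) with ((th * x + th * (xk - x)) * ia) by ring.
      apply Rmult_le_compat_r; [lra|].
      assert (th * (xk - x) <= Rabs th * Rabs (xk - x)) by (rewrite <- Rabs_mult; apply Rle_abs).
      assert (Rabs th * Rabs (xk - x) <= Rabs th * r) by (apply Rmult_le_compat_l; lra).
      lra.
    - destruct (Rle_dec x xk) as [Hxx|Hxx].
      + rewrite Rabs_right in Hout by lra.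
        cut (p t k * exp (th / a t * xk) <= T1 * (p t k * exp ((th + lam) / a t * xk))); [lra|].
        replace (T1 * (p t k * exp ((th + lam) / a t * xk)))
          with (exp (lam * ia * (xk - x - r)) * (p t k * exp (th / a t * xk))).
        * apply le_scale; [apply Rmult_le_pos; lra|]. apply exp_ge1.
          apply Rmult_le_pos; [apply Rmult_le_pos|]; lra.
        * assert (E : exp (- lam * (x + r) * ia) * exp ((th + lam) / a t * xk) = exp (lam * ia * (xk - x - r)) * exp (th / a t * xk))
            by (rewrite <- !exp_plus; f_equal; unfold ia, Rdiv; ring).
          unfold T1. transitivity (p t k * (exp (lam * ia * (xk - x - r)) * exp (th / a t * xk))); [ring|].
          rewrite <- E. ring.
      + rewrite Rabs_left in Hout by lra.
        cut (p t k * exp (th / a t * xk) <= T2 * (p t k * exp ((th - lam) / a t * xk))); [lra|].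
        replace (T2 * (p t k * exp ((th - lam) / a t * xk)))
          with (exp (lam * ia * (x - r - xk)) * (p t k * exp (th / a t * xk))).
        * apply le_scale; [apply Rmult_le_pos; lra|]. apply exp_ge1.
          apply Rmult_le_pos; [apply Rmult_le_pos|]; lra.
        * assert (E : exp (lam * (x - r) * ia) * exp ((th - lam) / a t * xk) = exp (lam * ia * (x - r - xk)) * exp (th / a t * xk))
            by (rewrite <- !exp_plus; f_equal; unfold ia, Rdiv; ring).
          unfold T2. transitivity (p t k * (exp (lam * ia * (x - r - xk)) * exp (th / a t * xk))); [ring|].
          rewrite <- E. ring. }
  set (A := c * th ^ 2 / 2).
  set (M0 := Mg (p t) (X t) (th / a t)) in *.
  set (M1 := Mg (p t) (X t) ((th + lam) / a t)) in *.
  set (M2 := Mg (p t) (X t) ((th - lam) / a t)) in *.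
  set (Pr := prob (p t) (X t) O) in *.
  assert (HT1 : T1 * M1 <= exp ((A - g + e1) * ia)).
  { apply Rle_trans with (T1 * exp ((c * (th + lam) ^ 2 / 2 + e1) * ia)).
    { apply Rmult_le_compat_l; [apply Rlt_le, exp_pos|exact HM1]. }
    unfold T1. rewrite <- exp_plus. apply exp_mono. right.
    unfold A, g. rewrite <- Hcx. field. }
  assert (HT2 : T2 * M2 <= exp ((A - g + e1) * ia)).
  { apply Rle_trans with (T2 * exp ((c * (th - lam) ^ 2 / 2 + e1) * ia)).
    { apply Rmult_le_compat_l; [apply Rlt_le, exp_pos|exact HM2]. }
    unfold T2. rewrite <- exp_plus. apply exp_mono. right.
    unfold A, g. rewrite <- Hcx. field. }
  assert (HM0' : exp ((A - e1) * ia) <= M0) by exact HM0.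
  assert (Hsplit : exp ((A - e1) * ia) = exp ((A - g + e1) * ia) * exp ((g - 2 * e1) * ia)).
  { rewrite <- exp_plus. f_equal. ring. }
  assert (Hbig : 4 <= exp ((g - 2 * e1) * ia)).
  { eapply Rle_trans; [exact HEB1|]. apply exp_mono. apply Rmult_le_compat_r; lra. }
  assert (HKP : exp ((A - e1) * ia) / 2 <= K * Pr).
  { pose proof (exp_pos ((A - g + e1) * ia)). rewrite Hsplit in *. nra. }
  set (Y := exp ((A - e1 - (th * x + Rabs th * r)) * ia)).
  assert (HY : exp ((A - e1) * ia) = K * Y).
  { unfold K, Y. rewrite <- exp_plus. f_equal. ring. }
  assert (HKpos : 0 < K) by apply exp_pos.
  assert (HPr : Y / 2 <= Pr).
  { rewrite HY in HKP. apply Rmult_le_reg_l with K; [exact HKpos|]. lra. }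
  assert (HYb : exp ((- ix - eps) * ia) * 2 <= Y).
  { apply Rle_trans with (exp ((- ix - eps) * ia) * exp (5 * eps / 8 * ia)).
    { apply Rmult_le_compat_l; [apply Rlt_le, exp_pos|exact HEB2]. }
    rewrite <- exp_plus. unfold Y. apply exp_mono.
    replace (th * x) with (c * th ^ 2) by (rewrite <- Hcx; ring).
    rewrite Hixe. unfold A.
    replace ((- (c * th ^ 2 / 2) - eps) * ia + 5 * eps / 8 * ia) with ((- (c * th ^ 2 / 2) - 3 * eps / 8) * ia) by field.
    apply Rmult_le_compat_r; lra. }
  lra.
Qed.

Lemma GE (p X : R -> nat -> R) (a : R -> R) (c : R)
 (Hp : ev_infty (fun t => forall k, 0 <= p t k))
 (Hex : forall l, ev_infty (fun t => ex_series (fun k => p t k * exp (l / a t * X t k))))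
 (Hlim : forall l eps, 0 < eps -> ev_infty (fun t => 0 < Mg (p t) (X t) (l / a t) /\
     Rabs (a t * ln (Mg (p t) (X t) (l / a t)) - c * l^2/2) < eps))
 (Ha : ev_infty (fun t => 0 < a t))
 (Hai : forall K, ev_infty (fun t => K < / a t)) :
 LDP p X (fun t => / a t) (tilde_rate c).
Proof.
  split; [apply rate_good|]. split.
  - apply GE_upper; assumption.
  - apply GE_lower; assumption.
Qed.

Lemma taylor2 (f : R -> R) (Hd : forall x, ex_derive f x) (Hd2 : ex_derive (Derive f) 0) :
  forall eps, 0 < eps -> exists eta, 0 < eta /\ forall s, Rabs s < eta ->
    Rabs (f s - f 0 - Derive f 0 * s - Derive (Derive f) 0 * s^2/2) <= eps * s^2.
Proof.
  intros eps He.
  set (c2 := Derive (Derive f) 0). set (d0 := Derive f 0).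
  pose proof (Derive_correct _ _ Hd2) as H2. apply is_derive_Reals in H2.
  destruct (H2 eps He) as [dl Hdl].
  exists dl. split; [apply cond_pos|]. intros s Hs.
  set (g := fun x => f x - d0 * x - c2 * x^2/2).
  assert (Hg : forall x : R, is_derive g x (Derive f x - d0 - c2 * x)).
  { intros x. unfold g. auto_derive. apply Hd.
    change (Derive (fun x0 : R => f x0) x) with (Derive f x). field. }
  destruct (MVT_gen g 0 s (fun x => Derive f x - d0 - c2 * x)) as (xi & Hxi & Hmvt).
  { intros x _. apply Hg. }
  { intros x _. apply continuity_pt_filterlim. apply (ex_derive_continuous g).
    eexists. apply Hg. }
  assert (Hxs : Rabs xi <= Rabs s).
  { revert Hxi. unfold Rmin, Rmax. destruct (Rle_dec 0 s); intros [H1 H3].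
    - rewrite !Rabs_right; lra.
    - rewrite !Rabs_left1; lra. }
  assert (Hdg : Rabs (Derive f xi - d0 - c2 * xi) <= eps * Rabs xi).
  { destruct (Req_dec xi 0) as [->|Hx0].
    - replace (Derive f 0 - d0 - c2 * 0) with 0 by (unfold d0; ring). rewrite Rabs_R0. lra.
    - specialize (Hdl xi Hx0 ltac:(lra)). rewrite Rplus_0_l in Hdl. fold c2 in Hdl.
      replace (Derive f xi - d0 - c2 * xi) with (((Derive f xi - Derive f 0) / xi - c2) * xi) by (unfold d0; field; auto).
      rewrite Rabs_mult. apply Rmult_le_compat_r; [apply Rabs_pos| lra]. }
  replace (f s - f 0 - d0 * s - c2 * s ^ 2 / 2) with (g s - g 0) by (unfold g; field).
  rewrite Hmvt, Rminus_0_r, Rabs_mult.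
  replace (s^2) with (Rabs s * Rabs s) by (rewrite <- Rabs_mult; rewrite Rabs_right; [ring| nra]).
  pose proof (Rabs_pos s). pose proof (Rabs_pos xi).
  apply Rle_trans with (eps * Rabs xi * Rabs s); [apply Rmult_le_compat_r; lra|].
  rewrite Rmult_assoc. apply Rmult_le_compat_l; [lra|]. apply Rmult_le_compat_r; lra.
Qed.

Lemma Lambda_facts (Delta : R -> R) (HDelta_der : forall u, 0 < u -> ex_derive Delta u)
  (HDelta2 : ex_derive (Derive Delta) 1) :
  (forall x, ex_derive (Lambda Delta) x) /\ ex_derive (Derive (Lambda Delta)) 0 /\ Lambda Delta 0 = 0.
Proof.
  assert (H1 : forall x, ex_derive (Lambda Delta) x).
  { intros x. unfold Lambda. auto_derive. apply HDelta_der, exp_pos. }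
  split; [exact H1|]. split.
  - apply (ex_derive_ext (fun x => Derive Delta (exp x) * exp x)).
    + intros x. symmetry. apply is_derive_unique. unfold Lambda. auto_derive.
      apply HDelta_der, exp_pos. change (Derive (fun x0 : R => Delta x0) (exp x)) with (Derive Delta (exp x)). ring.
    + auto_derive. rewrite exp_0. exact HDelta2.
  - unfold Lambda. rewrite exp_0. ring.
Qed.

Lemma series_term_le (b : nat -> R) (K : nat) :
  (forall k, 0 <= b k) -> ex_series b -> b K <= Series b.
Proof.
  intros Hb Hex. pose proof (Series_correct _ Hex) as H.
  apply is_series_Reals in H.
  assert (H2 : sum_f_R0 b K <= Series b) by (apply sum_incr; [exact H| exact Hb]).
  destruct K as [|K]; simpl in H2 |- *; [lra|].
  pose proof (cond_pos_sum b K Hb). lra.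
Qed.

Lemma exp_pow s k : exp s ^ k = exp (s * INR k).
Proof.
  induction k as [|k IH].
  - simpl. rewrite Rmult_0_r, exp_0. reflexivity.
  - rewrite S_INR. simpl. rewrite IH, <- exp_plus. f_equal. ring.
Qed.

Lemma ex_series_0 : ex_series (fun _ : nat => 0).
Proof.
  assert (H : ex_series (fun k : nat => 0 * 0 ^ k)).
  { apply (ex_series_scal_l 0 (fun k => 0 ^ k)). apply ex_series_geom. rewrite Rabs_R0. lra. }
  revert H. apply ex_series_ext. intros k. simpl. ring.
Qed.

Lemma Series_0' : Series (fun _ : nat => 0) = 0.
Proof.
  rewrite (Series_ext (fun _ => 0) (fun k => 0 * 0)) by (intros; ring).
  rewrite Series_scal_l. ring.
Qed.

Lemma series_finsupp (f : nat -> R) (n : nat) :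
  (forall k, (n < k)%nat -> f k = 0) -> ex_series f /\ Series f = sum_f_R0 f n.
Proof.
  intros Hf.
  assert (Hex : ex_series f).
  { apply (ex_series_incr_n f (S n)). apply (ex_series_extR (fun _ => 0)); [|apply ex_series_0].
    intros k. symmetry. apply Hf. lia. }
  split; [exact Hex|].
  rewrite (Series_incr_n f (S n)) by (auto with arith || lia).
  rewrite (Series_ext _ (fun _ => 0)), Series_0'.
  - simpl. ring.
  - intros k. apply Hf. lia.
Qed.

Lemma W_decomp (dd w : nat -> R) (n : nat) (dl : R) (Hdl : 0 < dl)
  (Hex : forall x, 0 < x -> ex_series (fun k => dd k * x^k))
  (HD : 0 < Dser dd dl)
  (Hw : forall k, (n <= k)%nat -> w k = dd k * dl ^ k / Dser dd dl) :
  forall s, ex_series (fun k => w k * exp (s * INR k)) /\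
  Series (fun k => w k * exp (s * INR k)) = Dser dd (exp s * dl) / Dser dd dl +
     sum_f_R0 (fun k => w k * exp (s * INR k) - dd k * (exp s * dl)^k / Dser dd dl) n.
Proof.
  intros s.
  set (y := exp s * dl).
  assert (Hy : 0 < y) by (unfold y; pose proof (exp_pos s); nra).
  set (q := fun k => dd k * y ^ k / Dser dd dl).
  set (corr := fun k => w k * exp (s * INR k) - q k).
  assert (Hq : ex_series q).
  { apply (ex_series_extR (fun k => / Dser dd dl * (dd k * y ^ k))).
    - intros k. unfold q. field. lra.
    - apply (ex_series_scalR (/ Dser dd dl) (fun k => dd k * y ^ k)), Hex, Hy. }
  assert (Hc : ex_series corr /\ Series corr = sum_f_R0 corr n).
  { apply series_finsupp. intros k Hk. unfold corr, q. rewrite Hw by lia.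
    unfold y. rewrite Rpow_mult_distr, exp_pow. field. lra. }
  destruct Hc as [Hc1 Hc2].
  assert (E : forall k, w k * exp (s * INR k) = q k + corr k) by (intros; unfold corr; ring).
  split.
  - apply (ex_series_extR (fun k => q k + corr k)); [intros; symmetry; apply E|].
    apply (ex_series_plusR _ _ Hq Hc1).
  - rewrite (Series_ext _ _ E), Series_plus by assumption. rewrite Hc2.
    f_equal. unfold q. rewrite (Series_ext _ (fun k => (dd k * y ^ k) * / Dser dd dl)) by (intros; reflexivity).
    rewrite Series_scal_r. unfold Dser. reflexivity.
Qed.

Lemma ratio_bound (dd w : nat -> R) (n K : nat) (dl : R) (Hdl : 0 < dl)
  (Hdd : forall k, 0 <= dd k) (HK : (n < K)%nat) (HddK : 0 < dd K)
  (Hex : forall x, 0 < x -> ex_series (fun k => dd k * x^k))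
  (HD : 0 < Dser dd dl)
  (Hw : forall k, (n <= k)%nat -> w k = dd k * dl ^ k / Dser dd dl)
  (Hwn : forall k, (k < n)%nat -> 0 <= w k <= dd k * dl ^ k / Dser dd dl) :
  forall s, 2 * sum_f_R0 dd n / dd K + 1 <= exp s * dl ->
   ex_series (fun k => w k * exp (s * INR k)) /\
   0 < Dser dd (exp s * dl) / Dser dd dl /\
   Dser dd (exp s * dl) / Dser dd dl / 2 <= Series (fun k => w k * exp (s * INR k)) <=
   3 * (Dser dd (exp s * dl) / Dser dd dl) / 2.
Proof.
  intros s Hs.
  destruct (W_decomp dd w n dl Hdl Hex HD Hw s) as [HW1 HW2].
  split; [exact HW1|].
  set (y := exp s * dl) in *.
  set (C := sum_f_R0 dd n) in *.
  assert (HC : 0 <= C) by (apply cond_pos_sum, Hdd).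
  assert (Hy1 : 1 <= y).
  { assert (0 <= 2 * C / dd K) by (apply Rdiv_le_0_compat; lra). lra. }
  assert (Hy : 0 < y) by lra.
  assert (HDy : dd K * y ^ K <= Dser dd y).
  { apply (series_term_le (fun k => dd k * y ^ k)); [|apply Hex, Hy].
    intros k. apply Rmult_le_pos; [apply Hdd| apply pow_le; lra]. }
  assert (HyK : y ^ n * y <= y ^ K).
  { replace (y ^ n * y) with (y ^ (S n)) by (simpl; ring). apply Rle_pow; [lra|lia]. }
  assert (Hyn : 0 < y ^ n) by (apply pow_lt; lra).
  assert (HDy2 : 2 * C * y ^ n <= Dser dd y).
  { eapply Rle_trans; [|exact HDy].
    apply Rle_trans with (dd K * (y ^ n * y)); [|apply Rmult_le_compat_l; lra].
    assert (2 * C <= dd K * y).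
    { apply Rmult_le_compat_l with (r := dd K) in Hs; [|lra].
      replace (dd K * (2 * C / dd K + 1)) with (2 * C + dd K) in Hs by (field; lra). lra. }
    nra. }
  assert (HDypos : 0 < Dser dd y).
  { eapply Rlt_le_trans; [|exact HDy]. apply Rmult_lt_0_compat; [lra| apply pow_lt; lra]. }
  split; [apply Rdiv_lt_0_compat; lra|].
  set (corr := fun k => w k * exp (s * INR k) - dd k * y ^ k / Dser dd dl).
  assert (Hcorr : Rabs (sum_f_R0 corr n) <= C * y ^ n / Dser dd dl).
  { eapply Rle_trans; [apply sum_f_R0_triangle|].
    apply Rle_trans with (sum_f_R0 (fun k => dd k * y ^ n / Dser dd dl) n).
    - apply sum_Rle. intros k Hk.
      assert (Hyk : y ^ k <= y ^ n) by (apply Rle_pow; lia || lra).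
      assert (Hq : dd k * y ^ k / Dser dd dl <= dd k * y ^ n / Dser dd dl).
      { apply Rmult_le_compat_r; [apply Rlt_le, Rinv_0_lt_compat; lra|].
        apply Rmult_le_compat_l; [apply Hdd|lra]. }
      assert (Hq0 : 0 <= dd k * y ^ k / Dser dd dl).
      { apply Rdiv_le_0_compat; [|lra]. apply Rmult_le_pos; [apply Hdd| apply pow_le; lra]. }
      destruct (Nat.eq_dec k n) as [->|Hne].
      + assert (Hc0 : corr n = 0).
        { unfold corr, y. rewrite Hw by lia. rewrite Rpow_mult_distr, exp_pow. field. lra. }
        rewrite Hc0, Rabs_R0. lra.
      + assert (Hkn : (k < n)%nat) by lia. specialize (Hwn k Hkn).
        assert (Hwe : 0 <= w k * exp (s * INR k) <= dd k * y ^ k / Dser dd dl).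
        { pose proof (exp_pos (s * INR k)). split; [apply Rmult_le_pos; lra|].
          unfold y. rewrite Rpow_mult_distr, exp_pow.
          replace (dd k * (exp (s * INR k) * dl ^ k) / Dser dd dl) with (dd k * dl ^ k / Dser dd dl * exp (s * INR k)) by (field; lra).
          apply Rmult_le_compat_r; lra. }
        unfold corr. apply Rabs_le. lra.
    - rewrite (sum_eq _ (fun i => dd i * (y ^ n / Dser dd dl))) by (intros; unfold Rdiv; ring).
      rewrite <- (scal_sum dd n (y ^ n / Dser dd dl)). right.
      fold C. field. lra. }
  rewrite HW2. fold corr.
  assert (Hb : C * y ^ n / Dser dd dl <= Dser dd y / Dser dd dl / 2).
  { unfold Rdiv. rewrite Rmult_assoc. 
    replace (Dser dd y * / Dser dd dl * / 2) with ((Dser dd y / 2) * / Dser dd dl) by (field; lra).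
    rewrite <- (Rmult_assoc C). apply Rmult_le_compat_r; [apply Rlt_le, Rinv_0_lt_compat; lra| lra]. }
  apply Rabs_le_between in Hcorr || idtac.
  lra.
Qed.

Lemma final_alg (a v lam m lnS lnP lnR Lam L1 c G D dl : R) (Ha : 0 < a) (Hv : 0 < v) (HD : D <> 0) :
 a * (- (lam / sqrt (v * a)) * m - lnS + lnP + lnR) - c * lam^2/2 =
 a * (lnP - v * Lam) + a * (lnR - lnS) +
 a * v * (Lam - L1 * (lam / sqrt (v * a)) - c * (lam / sqrt (v * a))^2/2)
 + lam * sqrt a * (sqrt v * (L1 - dl * G / (v * D)) + / sqrt v * (dl * G / D - m)).
Proof.
  rewrite sqrt_mult by lra.
  pose proof (sqrt_lt_R0 v Hv) as Hqv. pose proof (sqrt_lt_R0 a Ha) as Hqa.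
  pose proof (sqrt_sqrt v (Rlt_le _ _ Hv)) as Ev. pose proof (sqrt_sqrt a (Rlt_le _ _ Ha)) as Ea.
  set (qv := sqrt v) in *. set (qa := sqrt a) in *.
  rewrite <- Ev, <- Ea. field. repeat split; lra.
Qed.

Lemma mgf_term (w S m v a l x : R) (Hv : 0 < v) (Ha : 0 < a) :
  w / S * exp (l / a * ((x - m) / v * sqrt (v * a))) =
  exp (- (l / sqrt (v * a)) * m) / S * (w * exp (l / sqrt (v * a) * x)).
Proof.
  assert (Hva : 0 < v * a) by nra.
  pose proof (sqrt_lt_R0 _ Hva) as Hq. pose proof (sqrt_sqrt _ (Rlt_le _ _ Hva)) as Eq.
  set (q := sqrt (v * a)) in *.
  assert (E : l / a * ((x - m) / v * q) = - (l / q) * m + l / q * x).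
  { replace (l / a * ((x - m) / v * q)) with (l * (x - m) * q / (v * a)) by (field; lra).
    rewrite <- Eq. field. lra. }
  rewrite E, exp_plus. unfold Rdiv. ring.
Qed.

Lemma ln_bound x : 1/2 <= x <= 3/2 -> Rabs (ln x) <= 1.
Proof.
  intros Hx. pose proof (exp_ineq1_le 1) as He.
  assert (H1 : ln x <= 1).
  { rewrite <- (ln_exp 1). apply ln_le; lra. }
  assert (H2 : - 1 <= ln x).
  { assert (ln 2 <= 1) by (rewrite <- (ln_exp 1); apply ln_le; lra).
    assert (ln (/2) <= ln x) by (apply ln_le; lra).
    rewrite ln_Rinv in H0 by lra. lra. }
  apply Rabs_le. lra.
Qed.

Theorem proposition3p2
  (d : nat -> nat -> R) (deltas : nat -> R -> R)
  (n : nat) (dd : nat -> R) (del : R -> R) (v : R -> R) (Delta : R -> R)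
  (* standing assumptions *)
  (Hd_nonneg : forall k j, 0 <= d k j)
  (HDj : forall j (x : R), 0 < x ->
     ex_series (fun k => d k j * x ^ k) /\ 0 < Dj d j x)
  (Hdeltas_pos : forall j t, 0 <= t -> 0 < deltas j t)
  (Hdeltas_lim : forall j, is_lim (deltas j) p_infty p_infty)
  (Hsum : forall x : R, 0 < x ->
     ex_series (fun j => d j j * x ^ j / Dj d j x) /\
     0 < Series (fun j => d j j * x ^ j / Dj d j x))
  (* (B1) *)
  (HB1_d : forall j k, (n <= j)%nat -> d k j = dd k)
  (HB1_delta : forall j t, (n <= j)%nat -> 0 <= t -> deltas j t = del t)
  (Hv_pos : forall x, 0 < x -> 0 < v x)
  (Hv_lim : is_lim v p_infty p_infty)
  (HDelta_der : forall u, 0 < u -> ex_derive Delta u)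
  (HDelta_lim : forall u, 0 < u ->
     is_lim (fun t => ln (Dser dd (u * t)) / v t) p_infty (Delta u))
  (* (B2) *)
  (HB2 : forall M : nat, exists k, (M <= k)%nat /\ 0 < d k k)
  (* (B3) *)
  (HB3 : forall k, (k < n)%nat ->
     (0 < dd k ->
        is_lim (fun t => weight d deltas k t / (dd k * del t ^ k / Dser dd (del t)))
               p_infty 0) /\
     (dd k = 0 -> d k k = 0))
  (* Delta''(1) exists *)
  (HDelta2 : ex_derive (Derive Delta) 1)
  (* (i) *)
  (Hi : forall u : R -> R, is_lim u p_infty 1 ->
     exists M : R, ev_infty (fun t =>
       Rabs (ln (Dser dd (u t * del t) / Dser dd (del t))
             - v (del t) * (Delta (u t) - Delta 1)) <= M))
  (* (ii) *)
  (Hii : exists M : R, ev_infty (fun t =>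
       Rabs (sqrt (v (del t)) *
             (Derive (Lambda Delta) 0
              - del t * Derive (Dser dd) (del t) / (v (del t) * Dser dd (del t)))) <= M))
  (* (iii) *)
  (Hiii : exists M : R, ev_infty (fun t =>
       ex_series (fun k => INR k * pmf d deltas t k) /\
       Rabs (/ sqrt (v (del t)) *
             (del t * Derive (Dser dd) (del t) / Dser dd (del t)
              - mean (pmf d deltas t))) <= M)) :
  forall a : R -> R,
    (forall t, 0 < t -> 0 < a t) ->
    is_lim a p_infty 0 ->
    is_lim (fun t => v (del t) * a t) p_infty p_infty ->
    good_rate_function (tilde_rate (Derive (Derive (Lambda Delta)) 0)) /\
    LDP (pmf d deltas)
        (fun t k => (INR k - mean (pmf d deltas t)) / v (del t) * sqrt (v (del t) * a t))
        (fun t => / a t)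
        (tilde_rate (Derive (Derive (Lambda Delta)) 0)).
Proof.
  intros a Hapos Halim Hvalim.
  assert (Hdd0 : forall k, 0 <= dd k).
  { intros k. rewrite <- (HB1_d n k) by lia. apply Hd_nonneg. }
  assert (HDjeq : forall j x, (n <= j)%nat -> Dj d j x = Dser dd x).
  { intros j x Hj. unfold Dj, Dser. apply Series_ext. intros k. rewrite HB1_d by exact Hj. reflexivity. }
  assert (HDex : forall x, 0 < x -> ex_series (fun k => dd k * x^k) /\ 0 < Dser dd x).
  { intros x Hx. destruct (HDj n x Hx) as [H1 H2]. split.
    - apply (ex_series_extR (fun k => d k n * x ^ k)); [|exact H1]. intros k. rewrite HB1_d by lia. reflexivity.
    - rewrite <- (HDjeq n x) by lia. exact H2. }
  assert (Hdel : forall t, 0 <= t -> 0 < del t).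
  { intros t Ht. rewrite <- (HB1_delta n t) by (lia || lra). apply Hdeltas_pos, Ht. }
  destruct (HB2 (S n)) as (K & HK & HdK).
  assert (HddK : 0 < dd K) by (rewrite <- (HB1_d K K) by lia; exact HdK).
  assert (Hwtail : forall t k, 0 <= t -> (n <= k)%nat ->
            weight d deltas k t = dd k * del t ^ k / Dser dd (del t)).
  { intros t k Ht Hk. unfold weight. rewrite (HB1_d k k Hk), (HB1_delta k t Hk Ht), (HDjeq k (del t) Hk).
    reflexivity. }
  assert (Hwpos : forall t k, 0 <= t -> 0 <= weight d deltas k t).
  { intros t k Ht. unfold weight. pose proof (Hdeltas_pos k t Ht).
    apply Rdiv_le_0_compat.
    - apply Rmult_le_pos; [apply Hd_nonneg| apply pow_le; lra].
    - apply (HDj k (deltas k t)); lra. }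
  assert (HB3ev : ev_infty (fun t => forall k, (k < n)%nat ->
              weight d deltas k t <= dd k * del t ^ k / Dser dd (del t))).
  { apply ev_fin. intros k Hk. destruct (HB3 k Hk) as [Hp Hz].
    destruct (Rle_lt_or_eq_dec 0 (dd k) (Hdd0 k)) as [Hpos|Hzero].
    - apply (ev_imp _ _ (ev_and _ _ (lim_fin _ _ (Hp Hpos) 1 Rlt_0_1) (ev_gt 0))).
      intros t [Hr Ht].
      set (den := dd k * del t ^ k / Dser dd (del t)) in *.
      assert (Hden : 0 < den).
      { unfold den. pose proof (Hdel t (Rlt_le _ _ Ht)). apply Rdiv_lt_0_compat.
        - apply Rmult_lt_0_compat; [lra| apply pow_lt; lra].
        - apply HDex; lra. }
      rewrite Rminus_0_r in Hr. apply Rabs_def2 in Hr. destruct Hr as [Hr _].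
      assert (E : weight d deltas k t = weight d deltas k t / den * den) by (field; lra).
      rewrite E. apply Rlt_le. 
      apply Rmult_lt_compat_r with (r := den) in Hr; [|lra]. lra.
    - exists 0. intros t _. unfold weight. rewrite (Hz (eq_sym Hzero)), <- Hzero.
      unfold Rdiv. rewrite !Rmult_0_l. lra. }
  set (Y0 := 2 * sum_f_R0 dd n / dd K + 1).
  assert (Hbig : ev_infty (fun t => 2 * Y0 < del t)).
  { apply (ev_imp _ _ (ev_and _ _ (lim_inf _ (Hdeltas_lim n) (2*Y0)) (ev_gt 0))).
    intros t [H Ht]. rewrite <- (HB1_delta n t) by (lia || lra). exact H. }
  assert (HW : ev_infty (fun t => 0 < t /\ forall s, Rabs s <= 1/2 ->
     ex_series (fun k => weight d deltas k t * exp (s * INR k)) /\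
     0 < Dser dd (exp s * del t) / Dser dd (del t) /\
     Dser dd (exp s * del t) / Dser dd (del t) / 2 <=
        Series (fun k => weight d deltas k t * exp (s * INR k)) <=
     3 * (Dser dd (exp s * del t) / Dser dd (del t)) / 2)).
  { apply (ev_imp _ _ (ev_and _ _ (ev_and _ _ HB3ev Hbig) (ev_gt 0))).
    intros t [[H3 Hb] Ht]. split; [exact Ht|]. intros s Hs.
    assert (Ht0 : 0 <= t) by lra.
    pose proof (Hdel t Ht0) as Hdt.
    apply (ratio_bound dd (fun k => weight d deltas k t) n K (del t) Hdt Hdd0 ltac:(lia) HddK
             (fun x Hx => proj1 (HDex x Hx)) (proj2 (HDex _ Hdt))
             (fun k Hk => Hwtail t k Ht0 Hk) (fun k Hk => conj (Hwpos t k Ht0) (H3 k Hk))).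
    pose proof (exp_ineq1_le s). apply Rabs_le_between in Hs.
    assert (1/2 <= exp s) by lra.
    fold Y0. nra. }
  assert (HS : ev_infty (fun t => 0 < t /\ 1/2 <= Series (fun j => weight d deltas j t) <= 3/2)).
  { apply (ev_imp _ _ HW). intros t [Ht H]. split; [exact Ht|].
    destruct (H 0 ltac:(rewrite Rabs_R0; lra)) as (_ & _ & H2).
    rewrite exp_0, Rmult_1_l in H2.
    assert (HD : 0 < Dser dd (del t)) by (apply HDex, Hdel; lra).
    replace (Dser dd (del t) / Dser dd (del t)) with 1 in H2 by (field; lra).
    rewrite (Series_ext _ (fun k => weight d deltas k t * exp (0 * INR k)))
      by (intros; rewrite Rmult_0_l, exp_0; ring).
    lra. }
  assert (Hsmall : forall l eta, 0 < eta -> ev_infty (fun t =>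
        0 < v (del t) * a t /\ Rabs (l / sqrt (v (del t) * a t)) < eta)).
  { intros l eta Heta. apply (ev_imp _ _ (lim_inf _ Hvalim ((Rabs l / eta)^2))).
    intros t Ht. pose proof (Rabs_pos l).
    assert (H0 : 0 <= Rabs l / eta) by (apply Rdiv_le_0_compat; lra).
    assert (Hva : 0 < v (del t) * a t) by nra.
    split; [exact Hva|].
    assert (Hq : Rabs l / eta < sqrt (v (del t) * a t)).
    { rewrite <- (sqrt_pow2 (Rabs l / eta)) by exact H0. apply sqrt_lt_1_alt. split; [nra| exact Ht]. }
    pose proof (sqrt_lt_R0 _ Hva) as Hqp.
    unfold Rdiv at 1. rewrite Rabs_mult, Rabs_inv, (Rabs_right (sqrt _)) by lra.
    apply Rlt_div_l in Hq; [|lra].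
    apply (Rmult_lt_reg_r (sqrt (v (del t) * a t))); [lra|].
    rewrite Rmult_assoc, Rinv_l, Rmult_1_r by lra. lra. }
  destruct (Lambda_facts Delta HDelta_der HDelta2) as (HLd & HLd2 & HL0).
  split; [apply rate_good|].
  apply GE.
  - apply (ev_imp _ _ HS). intros t [Ht HSt] k. unfold pmf.
    apply Rdiv_le_0_compat; [apply Hwpos; lra| lra].
  - intros l. apply (ev_imp _ _ (ev_and _ _ (ev_and _ _ (Hsmall l (1/2) ltac:(lra)) HW) HS)).
    intros t [[[Hva Hs] [Ht HWt]] [_ HSt]].
    destruct (HWt _ (Rlt_le _ _ Hs)) as [Hex _].
    pose proof (Hdel t ltac:(lra)) as Hdt.
    apply (ex_series_extR (fun k => exp (- (l / sqrt (v (del t) * a t)) * mean (pmf d deltas t))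
        / Series (fun j => weight d deltas j t) *
        (weight d deltas k t * exp (l / sqrt (v (del t) * a t) * INR k)))).
    + intros k. unfold pmf. symmetry. apply mgf_term; [apply Hv_pos, Hdt| apply Hapos, Ht].
    + apply ex_series_scalR. exact Hex.
  - intros l eps He. cbv beta.
    assert (HeT : 0 < eps / (4 * (l^2+1))) by (apply Rdiv_lt_0_compat; nra).
    destruct (taylor2 (Lambda Delta) HLd HLd2 _ HeT) as (eta & Heta & Htay).
    destruct Hii as (M2 & HM2). destruct Hiii as (M3 & HM3).
    set (u := fun t => exp (l / sqrt (v (del t) * a t))).
    assert (Hu : is_lim u p_infty 1).
    { assert (Hs0 : is_lim (fun t => l / sqrt (v (del t) * a t)) p_infty 0).
      { apply lim_fin_conv. intros e He'. apply (ev_imp _ _ (Hsmall l e He')).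
        intros t [_ H]. rewrite Rminus_0_r. exact H. }
      pose proof (is_lim_comp_continuous _ exp _ _ Hs0 (continuous_exp 0)) as H.
      rewrite exp_0 in H. exact H. }
    destruct (Hi u Hu) as (M1 & HM1).
    pose proof (Rabs_pos M1). pose proof (Rabs_pos M2). pose proof (Rabs_pos M3). pose proof (Rabs_pos l).
    set (e4 := eps / (4 * (Rabs l * (Rabs M2 + Rabs M3) + 1))).
    assert (He4 : 0 < e4) by (apply Rdiv_lt_0_compat; [lra|]; assert (0 <= Rabs l * (Rabs M2 + Rabs M3)) by nra; lra).
    set (da := Rmin (eps / (4 * (Rabs M1 + 1))) (Rmin (eps/8) (e4^2))).
    assert (Hda : 0 < da).
    { apply Rmin_pos; [apply Rdiv_lt_0_compat; lra|]. apply Rmin_pos; [lra|]. nra. }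
    assert (Hda1 : da <= eps / (4 * (Rabs M1 + 1))) by apply Rmin_l.
    assert (Hda2 : da <= eps/8) by (eapply Rle_trans; [apply Rmin_r| apply Rmin_l]).
    assert (Hda3 : da <= e4^2) by (eapply Rle_trans; [apply Rmin_r| apply Rmin_r]).
    pose proof (lim_fin _ _ Halim da Hda) as Hasm.
    assert (Hmin : 0 < Rmin eta (1/2)) by (apply Rmin_pos; lra).
    apply (ev_imp _ _ (ev_and _ _ (ev_and _ _ (ev_and _ _ (ev_and _ _ (ev_and _ _
       (Hsmall l _ Hmin) HW) HS) HM1) (ev_and _ _ HM2 HM3)) Hasm)).
    intros t [[[[[[Hva Hs] [Ht HWt]] [_ HSt]] HM1t] [HM2t [_ HM3t]]] Hat].
    pose proof (Hapos t Ht) as Hapt. pose proof (Hdel t ltac:(lra)) as Hdt.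
    pose proof (Hv_pos _ Hdt) as Hvt.
    assert (HDt : 0 < Dser dd (del t)) by (apply HDex; lra).
    rewrite Rminus_0_r, Rabs_right in Hat by lra.
    assert (Ha1 : a t < eps / (4 * (Rabs M1 + 1))) by lra.
    assert (Ha2 : a t < eps / 8) by lra.
    assert (Ha3 : a t < e4 ^ 2) by lra.
    set (s := l / sqrt (v (del t) * a t)) in *.
    assert (Hs1 : Rabs s <= 1/2) by (pose proof (Rmin_r eta (1/2)); lra).
    assert (Hs2 : Rabs s < eta) by (pose proof (Rmin_l eta (1/2)); lra).
    destruct (HWt s Hs1) as (HexW & HP & HWb).
    set (m := mean (pmf d deltas t)) in *.
    set (S := Series (fun j => weight d deltas j t)) in *.
    set (W := Series (fun k => weight d deltas k t * exp (s * INR k))) in *.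
    set (P := Dser dd (exp s * del t) / Dser dd (del t)) in *.
    assert (HMg : Mg (pmf d deltas t) (fun k => (INR k - m) / v (del t) * sqrt (v (del t) * a t)) (l / a t)
                  = exp (- s * m) / S * W).
    { unfold Mg, W. rewrite <- Series_scal_l. apply Series_ext. intros k. unfold pmf. fold S.
      apply mgf_term; assumption. }
    assert (HSpos : 0 < S) by lra.
    assert (HWpos : 0 < W) by lra.
    assert (HMpos : 0 < exp (- s * m) / S * W).
    { apply Rmult_lt_0_compat; [apply Rdiv_lt_0_compat; [apply exp_pos|lra]|lra]. }
    rewrite HMg. split; [exact HMpos|].
    assert (HWP : 0 < W / P) by (apply Rdiv_lt_0_compat; lra).
    assert (HlnW : ln W = ln P + ln (W / P)).
    { rewrite <- ln_mult by lra. f_equal. field. lra. }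
    assert (Hln : ln (exp (- s * m) / S * W) = - s * m - ln S + ln P + ln (W / P)).
    { unfold Rdiv at 1. rewrite ln_mult, ln_mult, ln_exp, ln_Rinv, HlnW; try lra.
      - apply exp_pos.
      - apply Rinv_0_lt_compat; lra.
      - apply Rmult_lt_0_compat; [apply exp_pos| apply Rinv_0_lt_compat; lra]. }
    rewrite Hln.
    assert (HR : Rabs (ln (W / P)) <= 1).
    { apply ln_bound. split.
      - apply (Rmult_le_reg_r P); [lra|]. replace (W / P * P) with W by (field; lra). lra.
      - apply (Rmult_le_reg_r P); [lra|]. replace (W / P * P) with W by (field; lra). lra. }
    assert (HSb : Rabs (ln S) <= 1) by (apply ln_bound; lra).
    change (Rabs (ln P - v (del t) * Lambda Delta s) <= M1) in HM1t.
    specialize (Htay s Hs2). rewrite HL0, Rminus_0_r in Htay.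
    pose proof (final_alg (a t) (v (del t)) l m (ln S) (ln P) (ln (W/P)) (Lambda Delta s)
       (Derive (Lambda Delta) 0) (Derive (Derive (Lambda Delta)) 0) (Derive (Dser dd) (del t))
       (Dser dd (del t)) (del t) Hapt Hvt ltac:(lra)) as Eq.
    fold s in Eq. rewrite Eq. clear Eq.
    set (X1 := ln P - v (del t) * Lambda Delta s) in *.
    set (X2 := ln (W/P)) in *. set (X3 := ln S) in *.
    set (X4 := Lambda Delta s - Derive (Lambda Delta) 0 * s - Derive (Derive (Lambda Delta)) 0 * s ^ 2 / 2) in *.
    set (X5 := sqrt (v (del t)) * (Derive (Lambda Delta) 0 -
       del t * Derive (Dser dd) (del t) / (v (del t) * Dser dd (del t)))) in *.
    set (X6 := / sqrt (v (del t)) * (del t * Derive (Dser dd) (del t) / Dser dd (del t) - m)) in *.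
    assert (Has : a t * v (del t) * s ^ 2 = l ^ 2).
    { change s with (l / sqrt (v (del t) * a t)).
      pose proof (sqrt_sqrt _ (Rlt_le _ _ Hva)) as Eq. pose proof (sqrt_lt_R0 _ Hva).
      set (q := sqrt (v (del t) * a t)) in *.
      replace (a t * v (del t)) with (q * q) by (rewrite Eq; ring). field. lra. }
    assert (Hsa : sqrt (a t) < e4).
    { rewrite <- (sqrt_pow2 e4) by lra. apply sqrt_lt_1_alt. lra. }
    pose proof (sqrt_pos (a t)) as Hsa0.
    assert (B1 : Rabs (a t * X1) <= a t * Rabs M1).
    { rewrite Rabs_mult, (Rabs_right (a t)) by lra. apply Rmult_le_compat_l; [lra|].
      pose proof (Rle_abs M1). lra. }
    assert (B2 : Rabs (a t * (X2 - X3)) <= a t * 2).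
    { rewrite Rabs_mult, (Rabs_right (a t)) by lra. apply Rmult_le_compat_l; [lra|].
      eapply Rle_trans; [apply Rabs_triang|]. rewrite Rabs_Ropp. lra. }
    assert (B3 : Rabs (a t * v (del t) * X4) <= eps / (4 * (l^2+1)) * l ^ 2).
    { rewrite Rabs_mult, (Rabs_right (a t * v (del t))) by nra.
      apply Rle_trans with (a t * v (del t) * (eps / (4 * (l ^ 2 + 1)) * s ^ 2)).
      { apply Rmult_le_compat_l; [nra| exact Htay]. }
      right. transitivity (eps / (4 * (l ^ 2 + 1)) * (a t * v (del t) * s ^ 2)); [field; nra|].
      rewrite Has. reflexivity. }
    assert (B4 : Rabs (l * sqrt (a t) * (X5 + X6)) <= Rabs l * sqrt (a t) * (Rabs M2 + Rabs M3)).
    { rewrite Rabs_mult, Rabs_mult, (Rabs_right (sqrt (a t))) by lra.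
      apply Rmult_le_compat_l; [nra|].
      eapply Rle_trans; [apply Rabs_triang|].
      pose proof (Rle_abs M2). pose proof (Rle_abs M3). lra. }
    assert (C1 : a t * (Rabs M1 + 1) < eps / 4).
    { apply Rmult_lt_compat_r with (r := Rabs M1 + 1) in Ha1; [|lra].
      replace (eps / (4 * (Rabs M1 + 1)) * (Rabs M1 + 1)) with (eps / 4) in Ha1 by (field; lra). lra. }
    assert (C3 : eps / (4 * (l^2+1)) * l ^ 2 < eps / 4).
    { replace (eps / (4 * (l ^ 2 + 1)) * l ^ 2) with (eps / 4 * (l^2 / (l^2+1))) by (field; nra).
      assert (l^2 / (l^2+1) < 1).
      { apply (Rmult_lt_reg_r (l^2+1)); [nra|]. replace (l ^ 2 / (l ^ 2 + 1) * (l ^ 2 + 1)) with (l^2) by (field; nra). lra. }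
      nra. }
    assert (C4 : Rabs l * sqrt (a t) * (Rabs M2 + Rabs M3) < eps / 4).
    { assert (Hq : 0 <= Rabs l * (Rabs M2 + Rabs M3)) by nra.
      apply Rle_lt_trans with ((Rabs l * (Rabs M2 + Rabs M3) + 1) * sqrt (a t)); [nra|].
      apply Rlt_le_trans with ((Rabs l * (Rabs M2 + Rabs M3) + 1) * e4); [apply Rmult_lt_compat_l; lra|].
      right. unfold e4. field. lra. }
    eapply Rle_lt_trans; [apply Rabs_triang|].
    eapply Rle_lt_trans; [apply Rplus_le_compat_r, Rabs_triang|].
    eapply Rle_lt_trans; [apply Rplus_le_compat_r, Rplus_le_compat_r, Rabs_triang|].
    lra.
  - apply (ev_imp _ _ (ev_gt 0)). exact Hapos.
  - intros Kk. destruct (Rle_dec Kk 0) as [HK0|HK0].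
    + exists 0. intros t Ht. pose proof (Rinv_0_lt_compat _ (Hapos t Ht)). lra.
    + assert (HKi : 0 < / Kk) by (apply Rinv_0_lt_compat; lra).
      apply (ev_imp _ _ (ev_and _ _ (lim_fin _ _ Halim (/ Kk) HKi) (ev_gt 0))).
      intros t [H Ht]. pose proof (Hapos t Ht) as Hat.
      rewrite Rminus_0_r, Rabs_right in H by lra.
      rewrite <- (Rinv_inv Kk). apply Rinv_lt_contravar; [nra|exact H].
Qed.
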